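(* Let $(s_i)_{i\in\mathbb{Z}}$ and $(t_j)_{j\in\mathbb{Z}}$ be strictly increasing bi-infinite real sequences, unbounded above and below, and let $F:\mathbb{R}^2\to\mathbb{R}^d$ have the BMSDD property with constant $L$ in each rectangle $[s_i,s_{i+1}]\times[t_j,t_{j+1}]$, $i,j\in\mathbb{Z}$. Then $F$ has the BMSDD property with constant $L$ in $\mathbb{R}^2$.
   Context: For $\sigma_1\ne\sigma_2$, $\tau_1\ne\tau_2$, $[\sigma_1,\sigma_2;\tau_1,\tau_2]F=\frac{F(\sigma_1,\tau_1)+F(\sigma_2,\tau_2)-F(\sigma_2,\tau_1)-F(\sigma_1,\tau_2)}{(\sigma_1-\sigma_2)(\tau_1-\tau_2)}$. $F$ has the BMSDD property with constant $L$ in $\Omega\subset\mathbb{R}^2$ if $\|[\sigma_1,\sigma_2;\tau_1,\tau_2]F\|_\infty\le L$ for all $\sigma_1\ne\sigma_2$, $\tau_1\ne\tau_2$ with $(\sigma_i,\tau_j)\in\Omega$ for all $i,j\in\{1,2\}$. *)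

(* Defs.v *)
From HB Require Import structures.
From mathcomp Require Import all_boot all_order all_algebra.
From mathcomp Require Import reals.
Set Implicit Arguments. Unset Strict Implicit. Unset Printing Implicit Defensive.
Import Order.TTheory GRing.Theory Num.Theory.
Local Open Scope ring_scope.

(* sup norm on R^d (= 0 for d = 0) *)
Definition supnorm (R : realType) (d : nat) (v : 'rV[R]_d) : R :=
  \big[Num.max/0]_(k < d) `|v ord0 k|.

Definition divdiff2 (R : realType) (d : nat) (F : R -> R -> 'rV[R]_d)
  (s1 s2 t1 t2 : R) : 'rV[R]_d :=
  ((s1 - s2) * (t1 - t2))^-1 *: (F s1 t1 + F s2 t2 - F s2 t1 - F s1 t2).

Definition BMSDD (R : realType) (d : nat) (F : R -> R -> 'rV[R]_d)
  (Omega : R -> R -> Prop) (L : R) : Prop :=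
  forall s1 s2 t1 t2 : R, s1 != s2 -> t1 != t2 ->
    Omega s1 t1 -> Omega s1 t2 -> Omega s2 t1 -> Omega s2 t2 ->
    supnorm (divdiff2 F s1 s2 t1 t2) <= L.

Definition rect (R : realType) (a b c e : R) : R -> R -> Prop :=
  fun x y => a <= x <= b /\ c <= y <= e.

(* Main.v *)
Require Import Defs.
From HB Require Import structures.
From mathcomp Require Import all_boot all_order all_algebra.
From mathcomp Require Import reals.
From mathcomp Require Import lra ring.
Import Order.TTheory GRing.Theory Num.Theory.
Set Implicit Arguments. Unset Strict Implicit.
Local Open Scope ring_scope.

Lemma s_mono (R : realType) (s : int -> R) (s_incr : forall i : int, s i < s (i + 1))
  i (n : nat) : s i <= s (i + n%:Z).
Proof.
elim: n => [|n IH]; first by rewrite addr0.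
apply: (le_trans IH); rewrite -addn1 PoszD addrA; exact: ltW.
Qed.

Lemma grid1 (R : realType) (s : int -> R)
  (s_incr : forall i : int, s i < s (i + 1))
  (s_ub : forall x : R, exists i : int, x < s i)
  (s_lb : forall x : R, exists i : int, s i < x)
  (P : R -> R -> Prop)
  (Pcomb : forall a b c, a < b -> b < c -> P a b -> P b c -> P a c)
  (Pcell : forall i a b, s i <= a -> a < b -> b <= s (i + 1) -> P a b) :
  forall a b, a < b -> P a b.
Proof.
have key : forall (n : nat) i a b, s i <= a -> a < b -> b <= s (i + n%:Z) -> P a b.
  elim=> [|n IH] i a b h1 h2 h3.
    rewrite addr0 in h3; exfalso; lra.
  have E : i + n.+1%:Z = (i + 1) + n%:Z by rewrite -addn1 PoszD addrA addrAC.
  rewrite E in h3.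
  case: (leP b (s (i + 1))) => hb; first exact: (Pcell i).
  case: (leP (s (i + 1)) a) => ha; first exact: (IH (i + 1)).
  apply: (Pcomb a (s (i + 1)) b) => //; first exact: (Pcell i).
  apply: (IH (i + 1)) => //.
move=> a b ab.
have [i hi] := s_lb a; have [j hj] := s_ub b.
have ij : i <= j.
  rewrite leNgt; apply/negP => ji.
  have H := @s_mono R s s_incr j `|i - j|%N.
  rewrite gez0_abs in H; last by rewrite subr_ge0 ltW.
  rewrite [j + _]addrC subrK in H; lra.
apply: (key `|j - i|%N i) => //; first exact: ltW.
by rewrite gez0_abs ?subr_ge0 // [i + _]addrC subrK; apply: ltW.
Qed.

Lemma supnorm_ge0 (R : realType) d (v : 'rV[R]_d) : 0 <= supnorm v.
Proof. rewrite /supnorm; elim/big_ind: _ => // x y hx hy; by rewrite le_max hx. Qed.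

Lemma coord_le (R : realType) d (v : 'rV[R]_d) k : `|v ord0 k| <= supnorm v.
Proof. by rewrite /supnorm (bigD1 k) //= le_max lexx. Qed.

Definition gk (R : realType) d (F : R -> R -> 'rV[R]_d) k a b c e : R :=
  (F a c + F b e - F b c - F a e) ord0 k.

Lemma gk_coord (R : realType) d (F : R -> R -> 'rV[R]_d) k a b c e :
  (divdiff2 F a b c e) ord0 k = ((a - b) * (c - e))^-1 * gk F k a b c e.
Proof. by rewrite /divdiff2 mxE. Qed.

Lemma gk_addl (R : realType) d (F : R -> R -> 'rV[R]_d) k a b b' c e :
  gk F k a b' c e = gk F k a b c e + gk F k b b' c e.
Proof. rewrite /gk !mxE; ring. Qed.

Lemma gk_addr (R : realType) d (F : R -> R -> 'rV[R]_d) k a b c e e' :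
  gk F k a b c e' = gk F k a b c e + gk F k a b e e'.
Proof. rewrite /gk !mxE; ring. Qed.

Lemma gk_swl (R : realType) d (F : R -> R -> 'rV[R]_d) k a b c e :
  gk F k b a c e = - gk F k a b c e.
Proof. rewrite /gk !mxE; ring. Qed.

Lemma gk_swr (R : realType) d (F : R -> R -> 'rV[R]_d) k a b c e :
  gk F k a b e c = - gk F k a b c e.
Proof. rewrite /gk !mxE; ring. Qed.

Theorem lemma5 (R : realType) (d : nat) (s t : int -> R)
  (F : R -> R -> 'rV[R]_d) (L : R)
  (s_incr : forall i : int, s i < s (i + 1))
  (t_incr : forall j : int, t j < t (j + 1))
  (s_ub : forall x : R, exists i : int, x < s i)
  (s_lb : forall x : R, exists i : int, s i < x)
  (t_ub : forall y : R, exists j : int, y < t j)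
  (t_lb : forall y : R, exists j : int, t j < y)
  (hF : forall i j : int,
      BMSDD F (rect (s i) (s (i + 1)) (t j) (t (j + 1))) L) :
  BMSDD F (fun _ _ => True) L.
Proof.
have L0 : 0 <= L.
  have := supnorm_ge0 (divdiff2 F (s 0) (s (0 + 1)) (t 0) (t (0 + 1))).
  have h1 := s_incr 0; have h2 := t_incr 0.
  suff : supnorm (divdiff2 F (s 0) (s (0 + 1)) (t 0) (t (0 + 1))) <= L by lra.
  apply: (hF 0 0); rewrite ?lt_eqF //; rewrite /rect; lra.
have base : forall k i j a b c e, s i <= a -> a < b -> b <= s (i + 1) ->
    t j <= c -> c < e -> e <= t (j + 1) ->
    `|gk F k a b c e| <= L * (b - a) * (e - c).
  move=> k i j a b c e h1 h2 h3 h4 h5 h6.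
  have H := le_trans (coord_le _ k) (hF i j a b c e (negbT (lt_eqF h2)) (negbT (lt_eqF h5))
    ltac:(rewrite /rect; lra) ltac:(rewrite /rect; lra)
    ltac:(rewrite /rect; lra) ltac:(rewrite /rect; lra)).
  rewrite gk_coord in H.
  have Dp : 0 < (a - b) * (c - e) by nra.
  have E : gk F k a b c e = ((a - b) * (c - e)) * (((a - b) * (c - e))^-1 * gk F k a b c e).
    by rewrite mulrA divff ?mul1r // gt_eqF.
  rewrite E normrM (gtr0_norm Dp).
  have -> : L * (b - a) * (e - c) = ((a - b) * (c - e)) * L by ring.
  by rewrite ler_pM2l.
have stepA : forall k j c e, t j <= c -> c < e -> e <= t (j + 1) ->
    forall a b, a < b -> `|gk F k a b c e| <= L * (b - a) * (e - c).
  move=> k j c e h4 h5 h6.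
  apply: (grid1 s_incr s_ub s_lb (P := fun a b => `|gk F k a b c e| <= L * (b - a) * (e - c))).
    move=> a b b' h1 h2 Q1 Q2; rewrite (gk_addl _ _ _ b).
    apply: le_trans (ler_normD _ _) _.
    have -> : L * (b' - a) * (e - c) = L * (b - a) * (e - c) + L * (b' - b) * (e - c) by ring.
    exact: lerD.
  move=> i a b h1 h2 h3; exact: (base k i j).
have Qall : forall k a b c e, a < b -> c < e -> `|gk F k a b c e| <= L * (b - a) * (e - c).
  move=> k a b c e hab.
  apply: (grid1 t_incr t_ub t_lb (P := fun c e => `|gk F k a b c e| <= L * (b - a) * (e - c))).
    move=> c' e' e'' h1 h2 Q1 Q2; rewrite (gk_addr _ _ _ _ _ e').
    apply: le_trans (ler_normD _ _) _.
    have -> : L * (b - a) * (e'' - c') = L * (b - a) * (e' - c') + L * (b - a) * (e'' - e') by ring.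
    exact: lerD.
  move=> j c' e' h1 h2 h3; exact: (stepA k j).
have Qabs : forall k a b c e, a != b -> c != e ->
    `|gk F k a b c e| <= L * `|a - b| * `|c - e|.
  move=> k a b c e.
  wlog ab : a b / a < b.
    move=> W hab hce; case: (ltgtP a b) => h; first exact: W.
    - have := W b a h; rewrite eq_sym hab => /(_ isT hce).
      by rewrite gk_swl normrN distrC.
    - by rewrite h eqxx in hab.
  wlog ce : c e / c < e.
    move=> W hab hce; case: (ltgtP c e) => h; first exact: W.
    - have := W e c h hab; rewrite eq_sym hce => /(_ isT).
      by rewrite gk_swr normrN (distrC e c).
    - by rewrite h eqxx in hce.
  move=> _ _; rewrite (distrC a b) (distrC c e).
  have -> : `|b - a| = b - a by apply: gtr0_norm; rewrite subr_gt0.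
  have -> : `|e - c| = e - c by apply: gtr0_norm; rewrite subr_gt0.
  exact: Qall.
move=> s1 s2 t1 t2 hs ht _ _ _ _.
rewrite /supnorm; elim/big_ind: _ => //.
  by move=> x y hx hy; rewrite ge_max hx hy.
move=> k _; rewrite gk_coord normrM normfV.
have hs' : `|s1 - s2| != 0 by rewrite normr_eq0 subr_eq0.
have ht' : `|t1 - t2| != 0 by rewrite normr_eq0 subr_eq0.
have P0 : 0 <= `|(s1 - s2) * (t1 - t2)|^-1 by rewrite invr_ge0.
apply: le_trans (ler_wpM2l P0 (Qabs k s1 s2 t1 t2 hs ht)) _.
rewrite normrM.
have -> : (`|s1 - s2| * `|t1 - t2|)^-1 * (L * `|s1 - s2| * `|t1 - t2|) = L.
  by field; rewrite ht' hs'.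
by [].
Qed.
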